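(* Let $\boldsymbol X$ be an $n\times d$ data matrix (rows $\boldsymbol x_1,\ldots,\boldsymbol x_n\in\mathbb R^d$), and let $\hat{\boldsymbol\mu}$ be a location estimator, i.e. a map assigning to every $n\times d$ data matrix a vector in $\mathbb R^d$, satisfying the following property: whenever all rows of a data matrix lie in a lower-dimensional affine subspace of $\mathbb R^d$, the estimate $\hat{\boldsymbol\mu}$ of that data matrix lies in that subspace as well. Then the finite-sample cellwise breakdown value satisfies $$\varepsilon^*_n(\hat{\boldsymbol\mu},\boldsymbol X)\leqslant \left\lceil \frac{n}{d}\right\rceil\Big/ n .$$
   Context: For an integer $m\ge 0$, $\boldsymbol X^m$ denotes any corrupted data matrix obtained from $\boldsymbol X$ by replacing at most $m$ cells (entries) in each column of $\boldsymbol X$ by arbitrary real values. The finite-sample cellwise breakdown value of $\hat{\boldsymbol\mu}$ at $\boldsymbol X$ is $$\varepsilon^*_n(\hat{\boldsymbol\mu},\boldsymbol X)=\min\Big\{\tfrac{m}{n}:\ \sup_{\boldsymbol X^m}\|\hat{\boldsymbol\mu}(\boldsymbol X^m)-\hat{\boldsymbol\mu}(\boldsymbol X)\|=\infty\Big\},$$ the supremum being over all such corrupted matrices $\boldsymbol X^m$. *)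

(* Defs.v *)
From mathcomp Require Import all_boot all_order all_algebra.
From mathcomp Require Import reals.
Set Implicit Arguments. Unset Strict Implicit. Unset Printing Implicit Defensive.
Import Order.TTheory GRing.Theory Num.Theory.
Local Open Scope ring_scope.

Definition eucl_norm (R : realType) (d : nat) (v : 'rV[R]_d) : R :=
  Num.sqrt (\sum_(j < d) v ord0 j ^+ 2).

(* Affine subspace a + V, V given by the row space of a d x d matrix;
   its dimension is \rank V. *)
Definition in_affine (R : realType) (d : nat) (a : 'rV[R]_d) (V : 'M[R]_d)
  (x : 'rV[R]_d) : Prop := ((x - a) <= V)%MS.

Definition affine_subspace_preserving (R : realType) (n d : nat)
  (mu : 'M[R]_(n, d) -> 'rV[R]_d) : Prop :=
  forall (Y : 'M[R]_(n, d)) (a : 'rV[R]_d) (V : 'M[R]_d),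
    (\rank V < d)%N ->
    (forall i : 'I_n, in_affine a V (row i Y)) ->
    in_affine a V (mu Y).

Definition cell_corrupted (R : realType) (n d m : nat)
  (X Xm : 'M[R]_(n, d)) : Prop :=
  forall j : 'I_d, (#|[set i : 'I_n | Xm i j != X i j]| <= m)%N.

Definition cellwise_breaks_down (R : realType) (n d : nat)
  (mu : 'M[R]_(n, d) -> 'rV[R]_d) (X : 'M[R]_(n, d)) (m : nat) : Prop :=
  forall B : R, exists Xm : 'M[R]_(n, d),
    cell_corrupted m X Xm /\ B < eucl_norm (mu Xm - mu X).

(* Main.v *)
Require Import Defs.
From mathcomp Require Import all_boot all_order all_algebra.
From mathcomp Require Import reals.
From mathcomp Require Import zify.
Import Order.TTheory GRing.Theory Num.Theory.
Local Open Scope ring_scope.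

Lemma abs_le_eucl (R : realType) (d : nat) (w : 'rV[R]_d) (j : 'I_d) :
  `|w ord0 j| <= eucl_norm w.
Proof.
rewrite /eucl_norm -sqrtr_sqr; apply: ler_wsqrtr.
rewrite (bigD1 j) //= lerDl; apply: sumr_ge0 => k _; exact: sqr_ge0.
Qed.

Lemma sum_le_eucl (R : realType) (d : nat) (w : 'rV[R]_d) :
  `|\sum_j w ord0 j| <= d%:R * eucl_norm w.
Proof.
apply: (le_trans (ler_norm_sum _ _ _)).
have -> : d%:R * eucl_norm w = \sum_(j < d) eucl_norm w.
  by rewrite sumr_const card_ord mulr_natl.
by apply: ler_sum => j _; apply: abs_le_eucl.
Qed.

Lemma mul_ones (R : realType) (d : nat) (x : 'rV[R]_d) :
  x *m const_mx 1 = (\sum_j x ord0 j)%:M.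
Proof.
apply/matrixP => i k; rewrite !ord1 !mxE; apply: eq_bigr => j _.
by rewrite mxE mulr1.
Qed.

Lemma in_aff_ones (R : realType) (d : nat) (x a : 'rV[R]_d) :
  in_affine a (kermx (const_mx 1 : 'M[R]_(d, 1))) x <->
  \sum_j x ord0 j = \sum_j a ord0 j.
Proof.
rewrite /in_affine sub_kermx mul_ones.
have -> : \sum_j (x - a) ord0 j = \sum_j x ord0 j - \sum_j a ord0 j.
  by rewrite -sumrB; apply: eq_bigr => j _; rewrite !mxE.
split.
  move/eqP/matrixP => /(_ ord0 ord0); rewrite !mxE /= mulr1n => /eqP.
  by rewrite subr_eq0 => /eqP.
by move=> ->; rewrite subrr; apply/eqP/matrixP => i k; by rewrite !ord1 !mxE mul0rn.
Qed.

Theorem proposition1 (R : realType) (n d : nat) (hn : (0 < n)%N) (hd : (0 < d)%N)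
  (mu : 'M[R]_(n, d) -> 'rV[R]_d) (X : 'M[R]_(n, d)) :
  affine_subspace_preserving mu ->
  exists m : nat, (m <= (n + d.-1) %/ d)%N /\ cellwise_breaks_down mu X m.
Proof.
case: n hn mu X => // n' _; case: d hd => // d' _ mu X Hmu.
set m := ((n'.+1 + d'.+1.-1) %/ d'.+1)%N.
have mpos : (0 < m)%N by rewrite /m; lia.
have mdn : (n'.+1 <= m * d'.+1)%N.
  have := divn_eq (n'.+1 + d'.+1.-1) d'.+1; have := ltn_pmod (n'.+1 + d'.+1.-1) (ltn0Sn d').
  rewrite /m; lia.
exists m; split => // B.
pose ones : 'M[R]_(d'.+1, 1) := const_mx 1.
pose V := kermx ones.
pose g (i : 'I_n'.+1) : 'I_d'.+1 := inord (i %/ m).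
have gE (i : 'I_n'.+1) : nat_of_ord (g i) = (i %/ m)%N.
  rewrite /g inordK // ltn_divLR //; have := ltn_ord i; lia.
pose s := \sum_j mu X ord0 j.
pose t := s + d'.+1%:R * (`|B| + 1).
pose Xm : 'M[R]_(n'.+1, d'.+1) :=
  \matrix_(i, j) (X i j + (j == g i)%:R * (t - \sum_k X i k)).
have rowsum (i : 'I_n'.+1) : \sum_j (row i Xm) ord0 j = t.
  rewrite (eq_bigr (fun j => X i j + (j == g i)%:R * (t - \sum_k X i k)));
    last by move=> j _; rewrite !mxE.
  rewrite big_split /=; set S := \sum_k X i k.
  rewrite (bigD1 (g i)) //= eqxx mul1r big1 ?addr0.
    by rewrite addrC subrK.
  by move=> j /negbTE ->; rewrite mul0r.
exists Xm; split.
  move=> j.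
  have sub : [set i | Xm i j != X i j] \subset [set i : 'I_n'.+1 | (i %/ m == j)%N].
    apply/subsetP => i; rewrite !inE mxE.
    have [E|E] := eqVneq j (g i).
      by move=> _; rewrite E gE.
    have E' : (j == g i) = false by apply/negbTE.
    move: E'; case: (j == g i) => // _.
    by rewrite mul0r addr0 eqxx.
  apply: leq_trans (subset_leq_card sub) _.
  pose f (i : 'I_n'.+1) : 'I_m := Ordinal (ltn_pmod i mpos).
  rewrite -(card_in_imset (f := f)).
    by apply: leq_trans (max_card _) _; rewrite card_ord.
  move=> i k; rewrite !inE => /eqP hi /eqP hk [] hf.
  apply/val_inj; rewrite /= (divn_eq i m) (divn_eq k m) hi hk hf //.
have hrk : (\rank V < d'.+1)%N.
  rewrite /V mxrank_ker.
  have : (0 < \rank ones)%N.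
    rewrite lt0n mxrank_eq0; apply/eqP => /matrixP /(_ ord0 ord0).
    by rewrite !mxE => /eqP; rewrite oner_eq0.
  lia.
have := Hmu Xm (row ord0 Xm) V hrk.
have H : forall i, in_affine (row ord0 Xm) V (row i Xm).
  by move=> i; apply/in_aff_ones; rewrite !rowsum.
move=> /(_ H) /in_aff_ones; rewrite rowsum => hmu.
have := @sum_le_eucl R _ (mu Xm - mu X).
have -> : \sum_j (mu Xm - mu X) ord0 j = d'.+1%:R * (`|B| + 1).
  rewrite (eq_bigr (fun j => mu Xm ord0 j - mu X ord0 j)); last by move=> j _; rewrite !mxE.
  by rewrite sumrB hmu /t -/s addrC addKr.
rewrite ger0_norm; last by rewrite mulr_ge0 // addr_ge0.
rewrite ler_pM2l ?ltr0Sn // => h.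
apply: lt_le_trans h; apply: le_lt_trans (ler_norm B) _; by rewrite ltrDl.
Qed.
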